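(* In the Reissner–Nordström spacetime with $m^2\ge q^2$ (and $m>0$), let $r_+=m+\sqrt{m^2-q^2}$. Define, for a vector field $\vec A$, $Q[\vec A]=\int_0^{2\pi}d\varphi\int_0^\pi\sin\theta\,d\theta\int_{r_+}^{\infty}(-A^t)\,r^2\,dr$ (the flux through a slice $t=\mathrm{const}$, $r>r_+$). Then $$Q_1\equiv Q[\vec j(\vec\xi_1)]=\frac{4\pi}{15\,r_+}\left(6-14\frac{m}{r_+}+14\frac{m^2}{r_+^2}-5\frac{m^3}{r_+^3}\right),$$ and, for each $a\in\{2,3,4\}$, $$Q_2\equiv Q[\vec j(\vec\xi_a,\vec\xi_a,\vec\xi_1)]=\frac{8\pi}{27}\,r_+\left(13-16\frac{m}{r_+}+16\frac{m^2}{r_+^2}\right).$$ Moreover $Q[\vec{\mathcal J}(\vec\xi_1)]=4\pi q^2/r_+$ where $\mathcal J^\alpha(\vec\xi_1)=T^{\alpha\beta}\xi_{1\beta}$ with $T^\mu{}_\nu=\frac{q^2}{r^4}\mathrm{diag}(-1,-1,1,1)$. In the Schwarzschild case $q=0$: $Q_1=\pi/(4m)$ and $Q_2=16\pi m/3$.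
   Context: The Reissner–Nordström metric is $ds^2=-f\,dt^2+f^{-1}dr^2+r^2(d\theta^2+\sin^2\theta\,d\varphi^2)$, $f=1-\frac{2m}{r}+\frac{q^2}{r^2}$, considered for $r>r_+$. Killing vectors: $\vec\xi_1=\partial_t$, $\vec\xi_2=\sin\varphi\,\partial_\theta+\cos\varphi\cot\theta\,\partial_\varphi$, $\vec\xi_3=\cos\varphi\,\partial_\theta-\sin\varphi\cot\theta\,\partial_\varphi$, $\vec\xi_4=\partial_\varphi$. The Bel tensor is $$B_{\alpha\beta\lambda\mu}= R_{\alpha\rho\lambda\sigma} R_{\beta}{}^{\rho}{}_{\mu}{}^{\sigma} +R_{\alpha\rho\mu\sigma} R_{\beta}{}^{\rho}{}_{\lambda}{}^{\sigma} -\tfrac{1}{2}g_{\alpha\beta} R_{\rho\tau\lambda\sigma}R^{\rho\tau}{}_{\mu}{}^{\sigma} -\tfrac{1}{2}g_{\lambda\mu} R_{\alpha\rho\sigma\tau}R_{\beta}{}^{\rho\sigma\tau}+ \tfrac{1}{8}g_{\alpha\beta}g_{\lambda\mu} R_{\rho\tau\sigma\nu} R^{\rho\tau\sigma\nu},$$ and the Bel current is $j_\mu(\vec\xi_1,\vec\xi_2,\vec\xi_3)=B_{(\alpha\beta\lambda)\mu}\xi_1^\alpha\xi_2^\beta\xi_3^\lambda$, $\vec j(\vec\xi)=\vec j(\vec\xi,\vec\xi,\vec\xi)$. $A^t$ denotes the $t$-component of $\vec A$ in coordinates $(t,r,\theta,\varphi)$. *)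

(* Defs.v *)
From Stdlib Require Import Reals.
From Coquelicot Require Import Coquelicot.
Open Scope R_scope.

(* A point of the chart: coordinates x 0 = t, x 1 = r, x 2 = theta, x 3 = phi. *)
Definition pt := nat -> R.
Definition mkpt (t r th ph : R) : pt :=
  fun i => match i with 0%nat => t | 1%nat => r | 2%nat => th | _ => ph end.
Definition upd (x : pt) (k : nat) (s : R) : pt :=
  fun i => if Nat.eqb i k then s else x i.
Definition pd (k : nat) (F : pt -> R) (x : pt) : R :=
  Derive (fun s => F (upd x k s)) (x k).
Definition sum4 (F : nat -> R) : R := F 0%nat + F 1%nat + F 2%nat + F 3%nat.

Section RN.
Variables m q : R.

Definition fRN (r : R) : R := 1 - 2 * m / r + q ^ 2 / r ^ 2.
Definition rplus : R := m + sqrt (m ^ 2 - q ^ 2).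

Definition gl (mu nu : nat) (x : pt) : R :=
  match mu, nu with
  | 0%nat, 0%nat => - fRN (x 1%nat)
  | 1%nat, 1%nat => / fRN (x 1%nat)
  | 2%nat, 2%nat => (x 1%nat) ^ 2
  | 3%nat, 3%nat => (x 1%nat) ^ 2 * (sin (x 2%nat)) ^ 2
  | _, _ => 0
  end.
Definition gu (mu nu : nat) (x : pt) : R :=
  match mu, nu with
  | 0%nat, 0%nat => - / fRN (x 1%nat)
  | 1%nat, 1%nat => fRN (x 1%nat)
  | 2%nat, 2%nat => / (x 1%nat) ^ 2
  | 3%nat, 3%nat => / ((x 1%nat) ^ 2 * (sin (x 2%nat)) ^ 2)
  | _, _ => 0
  end.

Definition Gam (l a b : nat) (x : pt) : R :=
  / 2 * sum4 (fun s => gu l s x *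
     (pd a (gl s b) x + pd b (gl s a) x - pd s (gl a b) x)).

Definition RiemU (rho sig mu nu : nat) (x : pt) : R :=
  pd mu (Gam rho nu sig) x - pd nu (Gam rho mu sig) x
  + sum4 (fun l => Gam rho mu l x * Gam l nu sig x)
  - sum4 (fun l => Gam rho nu l x * Gam l mu sig x).

Definition Riem (a b c d : nat) (x : pt) : R :=
  sum4 (fun r => gl a r x * RiemU r b c d x).

Definition Bel (al be la mu : nat) (x : pt) : R :=
  sum4 (fun rho => sum4 (fun sig => sum4 (fun a => sum4 (fun b =>
     Riem al rho la sig x * gu rho a x * gu sig b x * Riem be a mu b x))))
  + sum4 (fun rho => sum4 (fun sig => sum4 (fun a => sum4 (fun b =>
     Riem al rho mu sig x * gu rho a x * gu sig b x * Riem be a la b x))))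
  - / 2 * gl al be x *
    sum4 (fun rho => sum4 (fun tau => sum4 (fun sig =>
     sum4 (fun a => sum4 (fun b => sum4 (fun c =>
       Riem rho tau la sig x * gu rho a x * gu tau b x * gu sig c x
       * Riem a b mu c x))))))
  - / 2 * gl la mu x *
    sum4 (fun rho => sum4 (fun sig => sum4 (fun tau =>
     sum4 (fun a => sum4 (fun b => sum4 (fun c =>
       Riem al rho sig tau x * gu rho a x * gu sig b x * gu tau c x
       * Riem be a b c x))))))
  + / 8 * gl al be x * gl la mu x *
    sum4 (fun rho => sum4 (fun tau => sum4 (fun sig => sum4 (fun nu =>
     sum4 (fun a => sum4 (fun b => sum4 (fun c => sum4 (fun d =>
       Riem rho tau sig nu x * gu rho a x * gu tau b x * gu sig c x
       * gu nu d x * Riem a b c d x)))))))).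

(* vector fields are given by their contravariant components *)
Definition vfield := pt -> nat -> R.

Definition belj (X1 X2 X3 : vfield) (mu : nat) (x : pt) : R :=
  / 6 * sum4 (fun al => sum4 (fun be => sum4 (fun la =>
    (Bel al be la mu x + Bel al la be mu x + Bel be al la mu x
     + Bel be la al mu x + Bel la al be mu x + Bel la be al mu x)
    * X1 x al * X2 x be * X3 x la))).

Definition beljU (X1 X2 X3 : vfield) : vfield :=
  fun x nu => sum4 (fun mu => gu nu mu x * belj X1 X2 X3 mu x).

Definition xi1 : vfield := fun x i => match i with 0%nat => 1 | _ => 0 end.
Definition xi2 : vfield := fun x i => match i with
  | 2%nat => sin (x 3%nat)
  | 3%nat => cos (x 3%nat) * (cos (x 2%nat) / sin (x 2%nat))
  | _ => 0 end.
Definition xi3 : vfield := fun x i => match i with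
  | 2%nat => cos (x 3%nat)
  | 3%nat => - sin (x 3%nat) * (cos (x 2%nat) / sin (x 2%nat))
  | _ => 0 end.
Definition xi4 : vfield := fun x i => match i with 3%nat => 1 | _ => 0 end.

Definition Tmix (mu nu : nat) (x : pt) : R :=
  match mu, nu with
  | 0%nat, 0%nat => - (q ^ 2 / (x 1%nat) ^ 4)
  | 1%nat, 1%nat => - (q ^ 2 / (x 1%nat) ^ 4)
  | 2%nat, 2%nat => q ^ 2 / (x 1%nat) ^ 4
  | 3%nat, 3%nat => q ^ 2 / (x 1%nat) ^ 4
  | _, _ => 0
  end.
Definition EMcur (X : vfield) : vfield :=
  fun x al => sum4 (fun be =>
    sum4 (fun nu => Tmix al nu x * gu nu be x) * sum4 (fun ga => gl be ga x * X x ga)).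

Definition Qflux (t0 : R) (A : vfield) : R :=
  RInt (fun ph =>
    RInt (fun th => sin th *
      RInt_gen (fun r => - A (mkpt t0 r th ph) 0%nat * r ^ 2)
               (at_right rplus) (Rbar_locally p_infty)) 0 PI) 0 (2 * PI).

End RN.

(* Main.v *)
Require Import Defs.
From Stdlib Require Import Reals Lra Lia.
From Coquelicot Require Import Coquelicot.
Open Scope R_scope.

Ltac nzr := repeat match goal with
  | |- _ /\ _ => split
  | |- True => exact I
  | |- _ * _ <> 0 => apply Rmult_integral_contrapositive_currified
  | |- 1 <> 0 => exact R1_neq_R0
  | |- _ => assumption
  end.

Definition f1 (m q r : R) : R := 2 * m / r ^ 2 - 2 * q ^ 2 / r ^ 3.
Definition f2 (m q r : R) : R := - 4 * m / r ^ 3 + 6 * q ^ 2 / r ^ 4.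

Lemma is_derive_fRN m q r : r <> 0 -> is_derive (fRN m q) r (f1 m q r).
Proof. intros H. unfold fRN, f1. auto_derive. nzr. field. auto. Qed.

Lemma is_derive_f1 m q r : r <> 0 -> is_derive (f1 m q) r (f2 m q r).
Proof. intros H. unfold f1, f2. auto_derive. nzr. field. auto. Qed.

Lemma is_derive_invfRN m q r : r <> 0 -> fRN m q r <> 0 ->
  is_derive (fun s => / fRN m q s) r (- f1 m q r / (fRN m q r)^2).
Proof. intros H1 H2. apply (is_derive_inv (fRN m q)); auto. apply is_derive_fRN; auto. Qed.

Ltac dside := repeat match goal with
  | |- _ /\ _ => split
  | |- True => exact I
  | |- ex_derive (fun x => fRN ?m ?q x) ?r => exists (f1 m q r); apply is_derive_fRN; assumption
  | |- ex_derive (fun x => f1 ?m ?q x) ?r => exists (f2 m q r); apply is_derive_f1; assumption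
  | |- _ * _ <> 0 => apply Rmult_integral_contrapositive_currified
  | |- 1 <> 0 => exact R1_neq_R0
  | |- 2 <> 0 => lra
  | |- _ => assumption
  end.

Ltac drew := repeat match goal with
  | |- context [Derive (fun x => fRN ?m ?q x) ?r] =>
      replace (Derive (fun x => fRN m q x) r) with (f1 m q r)
        by (symmetry; apply is_derive_unique; apply is_derive_fRN; assumption)
  | |- context [Derive (fun x => f1 ?m ?q x) ?r] =>
      replace (Derive (fun x => f1 m q x) r) with (f2 m q r)
        by (symmetry; apply is_derive_unique; apply is_derive_f1; assumption)
  end.

Ltac dsolve := first [ apply is_derive_const | auto_derive; [dside | drew; field; dside] ].

Definition glC (m q : R) (a b : nat) (r th : R) : R :=
  match a, b with
  | 0%nat, 0%nat => - fRN m q r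
  | 1%nat, 1%nat => / fRN m q r
  | 2%nat, 2%nat => r ^ 2
  | 3%nat, 3%nat => r ^ 2 * (sin th) ^ 2
  | _, _ => 0
  end.

Definition dglr (m q : R) (a b : nat) (r th : R) : R :=
  match a, b with
  | 0%nat, 0%nat => - f1 m q r
  | 1%nat, 1%nat => - f1 m q r / (fRN m q r) ^ 2
  | 2%nat, 2%nat => 2 * r
  | 3%nat, 3%nat => 2 * r * (sin th) ^ 2
  | _, _ => 0
  end.

Definition dglth (m q : R) (a b : nat) (r th : R) : R :=
  match a, b with
  | 3%nat, 3%nat => 2 * r ^ 2 * sin th * cos th
  | _, _ => 0
  end.

Lemma dgl_r m q a b r th : r <> 0 -> fRN m q r <> 0 ->
  is_derive (fun s => glC m q a b s th) r (dglr m q a b r th).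
Proof.
  intros H1 H2.
  destruct a as [|[|[|[|a]]]]; destruct b as [|[|[|[|b]]]]; cbn [glC dglr]; dsolve.
Qed.

Lemma dgl_th m q a b r th :
  is_derive (fun s => glC m q a b r s) th (dglth m q a b r th).
Proof.
  destruct a as [|[|[|[|a]]]]; destruct b as [|[|[|[|b]]]]; cbn [glC dglth]; dsolve.
Qed.

Definition good (m q : R) (y : pt) : Prop := rplus m q < y 1%nat /\ 0 < y 2%nat < PI.

Lemma rplus_ge_m m q : m <= rplus m q.
Proof. unfold rplus. pose proof (sqrt_pos (m ^ 2 - q ^ 2)). lra. Qed.

Lemma fRN_pos m q r : 0 < m -> rplus m q < r -> 0 < fRN m q r.
Proof.
  intros Hm Hr. pose proof (rplus_ge_m m q) as Hge.
  unfold rplus in Hr. set (s := sqrt (m ^ 2 - q ^ 2)) in *.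
  assert (Hs0 : 0 <= s) by apply sqrt_pos.
  destruct (Rle_or_lt 0 (m ^ 2 - q ^ 2)) as [Hd|Hd].
  - assert (Hs : s * s = m ^ 2 - q ^ 2) by (apply sqrt_sqrt; auto).
    assert (Hr0 : 0 < r) by (unfold rplus in Hge; lra).
    replace (fRN m q r) with (((r - m) ^ 2 - s * s) / r ^ 2).
    + apply Rdiv_lt_0_compat; [nra | apply pow_lt; lra].
    + unfold fRN. rewrite Hs. field. lra.
  - assert (Hr0 : 0 < r) by (unfold rplus in Hge; lra).
    replace (fRN m q r) with (((r - m) ^ 2 + (q ^ 2 - m ^ 2)) / r ^ 2).
    + apply Rdiv_lt_0_compat; [nra | apply pow_lt; lra].
    + unfold fRN. field. lra.
Qed.

Lemma good_facts m q y : 0 < m -> good m q y ->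
  0 < y 1%nat /\ 0 < fRN m q (y 1%nat) /\ 0 < sin (y 2%nat).
Proof.
  intros Hm [H1 H2]. pose proof (rplus_ge_m m q). split; [lra|split].
  - apply fRN_pos; auto.
  - apply sin_gt_0; lra.
Qed.

Lemma pd_gen m q (F : pt -> R) (G : R -> R -> R) x k :
  (forall y, good m q y -> F y = G (y 1%nat) (y 2%nat)) -> good m q x ->
  pd k F x = match k with
             | 1%nat => Derive (fun s => G s (x 2%nat)) (x 1%nat)
             | 2%nat => Derive (fun s => G (x 1%nat) s) (x 2%nat)
             | _ => 0 end.
Proof.
  intros HF Hx. unfold pd. destruct Hx as [Hx1 Hx2].
  destruct k as [|[|[|k]]].
  - rewrite (Derive_ext _ (fun _ => G (x 1%nat) (x 2%nat))). apply Derive_const.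
    intro t. rewrite HF. reflexivity. split; simpl; auto.
  - apply Derive_ext_loc.
    apply locally_interval with (a := Finite (rplus m q)) (b := p_infty). simpl; auto. simpl; auto.
    intros y Hy _. simpl in Hy. rewrite HF. reflexivity. split; simpl; auto.
  - apply Derive_ext_loc.
    apply locally_interval with (a := Finite 0) (b := Finite PI). simpl; lra. simpl; lra.
    intros y Hy1 Hy2. simpl in Hy1, Hy2. rewrite HF. reflexivity. split; simpl; auto.
  - rewrite (Derive_ext _ (fun _ => G (x 1%nat) (x 2%nat))). apply Derive_const.
    intro t. rewrite HF. reflexivity. split; simpl; auto.
Qed.

Definition dglk (m q : R) (k a b : nat) (r th : R) : R :=
  match k with 1%nat => dglr m q a b r th | 2%nat => dglth m q a b r th | _ => 0 end.

Lemma pd_gl m q x k a b : 0 < m -> good m q x ->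
  pd k (gl m q a b) x = dglk m q k a b (x 1%nat) (x 2%nat).
Proof.
  intros Hm Hx. pose proof (good_facts m q x Hm Hx) as [H1 [H2 H3]].
  rewrite (pd_gen m q _ (glC m q a b) x k); [| intros; reflexivity | auto].
  destruct k as [|[|[|k]]]; cbn [dglk]; try reflexivity.
  - apply is_derive_unique, dgl_r; lra.
  - apply is_derive_unique, dgl_th.
Qed.

Lemma sum4_gu m q l x (G : nat -> R) :
  sum4 (fun s => gu m q l s x * G s) = gu m q l l x * G l.
Proof. unfold sum4. destruct l as [|[|[|[|l]]]]; cbn [gu]; ring. Qed.

Lemma sum4_gl m q l x (G : nat -> R) :
  sum4 (fun s => gl m q l s x * G s) = gl m q l l x * G l.
Proof. unfold sum4. destruct l as [|[|[|[|l]]]]; cbn [gl]; ring. Qed.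

Definition GC (m q : R) (l a b : nat) (r th : R) : R :=
  let F := fRN m q r in let F1 := f1 m q r in let s := sin th in let c := cos th in
  match l, a, b with
  | 0%nat, 0%nat, 1%nat | 0%nat, 1%nat, 0%nat => F1 / (2 * F)
  | 1%nat, 0%nat, 0%nat => F * F1 / 2
  | 1%nat, 1%nat, 1%nat => - F1 / (2 * F)
  | 1%nat, 2%nat, 2%nat => - r * F
  | 1%nat, 3%nat, 3%nat => - r * F * s ^ 2
  | 2%nat, 1%nat, 2%nat | 2%nat, 2%nat, 1%nat => / r
  | 2%nat, 3%nat, 3%nat => - s * c
  | 3%nat, 1%nat, 3%nat | 3%nat, 3%nat, 1%nat => / r
  | 3%nat, 2%nat, 3%nat | 3%nat, 3%nat, 2%nat => c / s
  | _, _, _ => 0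
  end.

Lemma Gam_eq m q x l a b : 0 < m -> good m q x ->
  Gam m q l a b x = GC m q l a b (x 1%nat) (x 2%nat).
Proof.
  intros Hm Hx. pose proof (good_facts m q x Hm Hx) as [H1 [H2 H3]].
  unfold Gam. rewrite sum4_gu. rewrite !pd_gl by auto.
  assert (r0 : x 1%nat <> 0) by lra. assert (F0 : fRN m q (x 1%nat) <> 0) by lra.
  assert (s0 : sin (x 2%nat) <> 0) by lra.
  destruct l as [|[|[|[|l]]]]; destruct a as [|[|[|[|a]]]]; destruct b as [|[|[|[|b]]]];
    cbn [gu GC dglk dglr dglth]; first [ring | field; dside].
Qed.

Definition dGCr (m q : R) (l a b : nat) (r th : R) : R :=
  let F := fRN m q r in let F1 := f1 m q r in let F2 := f2 m q r in
  let s := sin th in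
  match l, a, b with
  | 0%nat, 0%nat, 1%nat | 0%nat, 1%nat, 0%nat => (F2 * F - F1 ^ 2) / (2 * F ^ 2)
  | 1%nat, 0%nat, 0%nat => (F1 ^ 2 + F * F2) / 2
  | 1%nat, 1%nat, 1%nat => - (F2 * F - F1 ^ 2) / (2 * F ^ 2)
  | 1%nat, 2%nat, 2%nat => - (F + r * F1)
  | 1%nat, 3%nat, 3%nat => - (F + r * F1) * s ^ 2
  | 2%nat, 1%nat, 2%nat | 2%nat, 2%nat, 1%nat => - / r ^ 2
  | 3%nat, 1%nat, 3%nat | 3%nat, 3%nat, 1%nat => - / r ^ 2
  | _, _, _ => 0
  end.

Definition dGCth (m q : R) (l a b : nat) (r th : R) : R :=
  let F := fRN m q r in let s := sin th in let c := cos th in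
  match l, a, b with
  | 1%nat, 3%nat, 3%nat => - r * F * (2 * s * c)
  | 2%nat, 3%nat, 3%nat => - (c * c - s * s)
  | 3%nat, 2%nat, 3%nat | 3%nat, 3%nat, 2%nat => - (c * c + s * s) / s ^ 2
  | _, _, _ => 0
  end.

Definition dGCk (m q : R) (k l a b : nat) (r th : R) : R :=
  match k with 1%nat => dGCr m q l a b r th | 2%nat => dGCth m q l a b r th | _ => 0 end.

Lemma dGC_r m q l a b r th : r <> 0 -> fRN m q r <> 0 ->
  is_derive (fun s => GC m q l a b s th) r (dGCr m q l a b r th).
Proof.
  intros H1 H2.
  destruct l as [|[|[|[|l]]]]; destruct a as [|[|[|[|a]]]]; destruct b as [|[|[|[|b]]]];
    cbn [GC dGCr]; dsolve.
Qed.

Lemma dGC_th m q l a b r th : sin th <> 0 ->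
  is_derive (fun s => GC m q l a b r s) th (dGCth m q l a b r th).
Proof.
  intros H1.
  destruct l as [|[|[|[|l]]]]; destruct a as [|[|[|[|a]]]]; destruct b as [|[|[|[|b]]]];
    cbn [GC dGCth]; dsolve.
Qed.

Lemma pd_Gam m q x k l a b : 0 < m -> good m q x ->
  pd k (Gam m q l a b) x = dGCk m q k l a b (x 1%nat) (x 2%nat).
Proof.
  intros Hm Hx. pose proof (good_facts m q x Hm Hx) as [H1 [H2 H3]].
  rewrite (pd_gen m q _ (GC m q l a b) x k); [| intros; apply Gam_eq; auto | auto].
  destruct k as [|[|[|k]]]; cbn [dGCk]; try reflexivity.
  - apply is_derive_unique, dGC_r; lra.
  - apply is_derive_unique, dGC_th; lra.
Qed.

Definition pairC (m q : R) (i j : nat) (r th : R) : R :=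
  let F := fRN m q r in let F1 := f1 m q r in let F2 := f2 m q r in
  let s := sin th in
  match i, j with
  | 0%nat, 1%nat => F2 / 2
  | 0%nat, 2%nat => F * F1 * r / 2
  | 0%nat, 3%nat => F * F1 * r * s ^ 2 / 2
  | 1%nat, 2%nat => - (F1 * r) / (2 * F)
  | 1%nat, 3%nat => - (F1 * r * s ^ 2) / (2 * F)
  | 2%nat, 3%nat => (1 - F) * r ^ 2 * s ^ 2
  | _, _ => 0
  end.

Definition RiemC (m q : R) (a b c d : nat) (r th : R) : R :=
  if Nat.ltb a b then
    (if andb (Nat.eqb c a) (Nat.eqb d b) then pairC m q a b r th
     else if andb (Nat.eqb c b) (Nat.eqb d a) then - pairC m q a b r th else 0)
  else if Nat.ltb b a then
    (if andb (Nat.eqb c b) (Nat.eqb d a) then - pairC m q b a r th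
     else if andb (Nat.eqb c a) (Nat.eqb d b) then pairC m q b a r th else 0)
  else 0.

Lemma Riem_eq m q x a b c d : 0 < m -> good m q x ->
  (a < 4)%nat -> (b < 4)%nat -> (c < 4)%nat -> (d < 4)%nat ->
  Riem m q a b c d x = RiemC m q a b c d (x 1%nat) (x 2%nat).
Proof.
  intros Hm Hx Ha Hb Hc Hd. pose proof (good_facts m q x Hm Hx) as [H1 [H2 H3]].
  unfold Riem. rewrite sum4_gl. unfold RiemU. rewrite !pd_Gam by auto.
  unfold sum4. rewrite !Gam_eq by auto.
  assert (r0 : x 1%nat <> 0) by lra. assert (F0 : fRN m q (x 1%nat) <> 0) by lra.
  assert (s0 : sin (x 2%nat) <> 0) by lra.
  destruct a as [|[|[|[|a]]]]; try lia; destruct b as [|[|[|[|b]]]]; try lia;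
  destruct c as [|[|[|[|c]]]]; try lia; destruct d as [|[|[|[|d]]]]; try lia;
    cbn [gl GC dGCk dGCr dGCth RiemC pairC Nat.ltb Nat.leb Nat.eqb andb];
    first [ring | field; dside].
Qed.

Lemma sum4_ext (F G : nat -> R) : (forall i, F i = G i) -> sum4 F = sum4 G.
Proof. intros H. unfold sum4. rewrite !H. reflexivity. Qed.

Lemma C_gen m q K r x (Z : nat -> R) :
  sum4 (fun a => K * gu m q r a x * Z a) = K * gu m q r r x * Z r.
Proof. unfold sum4. destruct r as [|[|[|[|r]]]]; cbn [gu]; ring. Qed.

Lemma L2 m q K r s x (G : nat -> nat -> R) :
  sum4 (fun a => sum4 (fun b => K * gu m q r a x * gu m q s b x * G a b)) =
  K * gu m q r r x * gu m q s s x * G r s.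
Proof.
  rewrite (sum4_ext _ (fun a => K * gu m q r a x * (gu m q s s x * G a s))).
  - rewrite C_gen. ring.
  - intro a. rewrite (C_gen m q (K * gu m q r a x) s x (fun b => G a b)). ring.
Qed.

Lemma L3 m q K r s t x (G : nat -> nat -> nat -> R) :
  sum4 (fun a => sum4 (fun b => sum4 (fun c =>
    K * gu m q r a x * gu m q s b x * gu m q t c x * G a b c))) =
  K * gu m q r r x * gu m q s s x * gu m q t t x * G r s t.
Proof.
  rewrite (sum4_ext _ (fun a => K * gu m q r a x * (gu m q s s x * gu m q t t x * G a s t))).
  - rewrite C_gen. ring.
  - intro a. rewrite (L2 m q (K * gu m q r a x) s t x (fun b c => G a b c)). ring.
Qed.

Lemma L4 m q K r s t u x (G : nat -> nat -> nat -> nat -> R) :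
  sum4 (fun a => sum4 (fun b => sum4 (fun c => sum4 (fun d =>
    K * gu m q r a x * gu m q s b x * gu m q t c x * gu m q u d x * G a b c d)))) =
  K * gu m q r r x * gu m q s s x * gu m q t t x * gu m q u u x * G r s t u.
Proof.
  rewrite (sum4_ext _ (fun a => K * gu m q r a x *
     (gu m q s s x * gu m q t t x * gu m q u u x * G a s t u))).
  - rewrite C_gen. ring.
  - intro a. rewrite (L3 m q (K * gu m q r a x) s t u x (fun b c d => G a b c d)). ring.
Qed.

Definition BelD (m q : R) (al be la mu : nat) (x : pt) : R :=
  sum4 (fun rho => sum4 (fun sig =>
     Riem m q al rho la sig x * gu m q rho rho x * gu m q sig sig x * Riem m q be rho mu sig x))
  + sum4 (fun rho => sum4 (fun sig =>
     Riem m q al rho mu sig x * gu m q rho rho x * gu m q sig sig x * Riem m q be rho la sig x))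
  - / 2 * gl m q al be x *
    sum4 (fun rho => sum4 (fun tau => sum4 (fun sig =>
       Riem m q rho tau la sig x * gu m q rho rho x * gu m q tau tau x * gu m q sig sig x
       * Riem m q rho tau mu sig x)))
  - / 2 * gl m q la mu x *
    sum4 (fun rho => sum4 (fun sig => sum4 (fun tau =>
       Riem m q al rho sig tau x * gu m q rho rho x * gu m q sig sig x * gu m q tau tau x
       * Riem m q be rho sig tau x)))
  + / 8 * gl m q al be x * gl m q la mu x *
    sum4 (fun rho => sum4 (fun tau => sum4 (fun sig => sum4 (fun nu =>
       Riem m q rho tau sig nu x * gu m q rho rho x * gu m q tau tau x * gu m q sig sig x
       * gu m q nu nu x * Riem m q rho tau sig nu x)))).

Lemma Bel_BelD m q al be la mu x : Bel m q al be la mu x = BelD m q al be la mu x.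
Proof.
  unfold Bel, BelD. f_equal; [f_equal; [f_equal; [f_equal|]|]|].
  - apply sum4_ext; intro rho; apply sum4_ext; intro sig.
    apply (L2 m q _ rho sig x (fun a b => Riem m q be a mu b x)).
  - apply sum4_ext; intro rho; apply sum4_ext; intro sig.
    apply (L2 m q _ rho sig x (fun a b => Riem m q be a la b x)).
  - f_equal. apply sum4_ext; intro rho; apply sum4_ext; intro tau; apply sum4_ext; intro sig.
    apply (L3 m q _ rho tau sig x (fun a b c => Riem m q a b mu c x)).
  - f_equal. apply sum4_ext; intro rho; apply sum4_ext; intro sig; apply sum4_ext; intro tau.
    apply (L3 m q _ rho sig tau x (fun a b c => Riem m q be a b c x)).
  - f_equal. apply sum4_ext; intro rho; apply sum4_ext; intro tau; apply sum4_ext; intro sig;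
    apply sum4_ext; intro nu.
    apply (L4 m q _ rho tau sig nu x (fun a b c d => Riem m q a b c d x)).
Qed.

Ltac prep m q x Hm Hx :=
  let H1 := fresh in let H2 := fresh in let H3 := fresh in
  pose proof (good_facts m q x Hm Hx) as [H1 [H2 H3]];
  assert (x 1%nat <> 0) by lra; assert (fRN m q (x 1%nat) <> 0) by lra;
  assert (sin (x 2%nat) <> 0) by lra.

Ltac redC := cbn [gl gu RiemC pairC Nat.ltb Nat.leb Nat.eqb andb].

Lemma Kret m q x : 0 < m -> good m q x ->
  sum4 (fun rho => sum4 (fun tau => sum4 (fun sig => sum4 (fun nu =>
       Riem m q rho tau sig nu x * gu m q rho rho x * gu m q tau tau x * gu m q sig sig x
       * gu m q nu nu x * Riem m q rho tau sig nu x)))) =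
  f2 m q (x 1%nat) ^ 2 + 4 * f1 m q (x 1%nat) ^ 2 / (x 1%nat) ^ 2
  + 4 * (1 - fRN m q (x 1%nat)) ^ 2 / (x 1%nat) ^ 4.
Proof.
  intros Hm Hx. prep m q x Hm Hx.
  unfold sum4. rewrite !Riem_eq by (auto; lia). redC.
  field. dside.
Qed.

Definition Ao m q r := f2 m q r / 2.
Definition Bo m q r := f1 m q r / (2 * r).
Definition Do m q r := (1 - fRN m q r) / r ^ 2.

Ltac belc m q x Hm Hx :=
  rewrite Bel_BelD; unfold BelD; rewrite (Kret m q x Hm Hx); prep m q x Hm Hx;
  unfold sum4; rewrite !Riem_eq by (auto; lia); redC; unfold Ao, Bo, Do;
  field; dside.

Lemma Bel0000 m q x : 0 < m -> good m q x ->
  Bel m q 0 0 0 0 x = fRN m q (x 1%nat) ^ 2 *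
    (Ao m q (x 1%nat) ^ 2 + 4 * Bo m q (x 1%nat) ^ 2 + Do m q (x 1%nat) ^ 2) / 2.
Proof. intros Hm Hx. belc m q x Hm Hx. Qed.

Lemma BelE0 m q x : 0 < m -> good m q x -> Bel m q 2 2 0 0 x = gl m q 2 2 x * fRN m q (x 1%nat) * ((Ao m q (x 1%nat) ^ 2 + Do m q (x 1%nat) ^ 2) / 2).
Proof. intros Hm Hx. belc m q x Hm Hx. Qed.

Lemma BelE1 m q x : 0 < m -> good m q x -> Bel m q 2 0 2 0 x = gl m q 2 2 x * fRN m q (x 1%nat) * (Bo m q (x 1%nat) * (Do m q (x 1%nat) - Ao m q (x 1%nat))).
Proof. intros Hm Hx. belc m q x Hm Hx. Qed.

Lemma BelE2 m q x : 0 < m -> good m q x -> Bel m q 0 2 2 0 x = gl m q 2 2 x * fRN m q (x 1%nat) * (Bo m q (x 1%nat) * (Do m q (x 1%nat) - Ao m q (x 1%nat))).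
Proof. intros Hm Hx. belc m q x Hm Hx. Qed.

Lemma BelE3 m q x : 0 < m -> good m q x -> Bel m q 2 3 0 0 x = 0.
Proof. intros Hm Hx. belc m q x Hm Hx. Qed.

Lemma BelE4 m q x : 0 < m -> good m q x -> Bel m q 2 0 3 0 x = 0.
Proof. intros Hm Hx. belc m q x Hm Hx. Qed.

Lemma BelE5 m q x : 0 < m -> good m q x -> Bel m q 0 2 3 0 x = 0.
Proof. intros Hm Hx. belc m q x Hm Hx. Qed.

Lemma BelE6 m q x : 0 < m -> good m q x -> Bel m q 3 2 0 0 x = 0.
Proof. intros Hm Hx. belc m q x Hm Hx. Qed.

Lemma BelE7 m q x : 0 < m -> good m q x -> Bel m q 3 0 2 0 x = 0.
Proof. intros Hm Hx. belc m q x Hm Hx. Qed.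

Lemma BelE8 m q x : 0 < m -> good m q x -> Bel m q 0 3 2 0 x = 0.
Proof. intros Hm Hx. belc m q x Hm Hx. Qed.

Lemma BelE9 m q x : 0 < m -> good m q x -> Bel m q 3 3 0 0 x = gl m q 3 3 x * fRN m q (x 1%nat) * ((Ao m q (x 1%nat) ^ 2 + Do m q (x 1%nat) ^ 2) / 2).
Proof. intros Hm Hx. belc m q x Hm Hx. Qed.

Lemma BelE10 m q x : 0 < m -> good m q x -> Bel m q 3 0 3 0 x = gl m q 3 3 x * fRN m q (x 1%nat) * (Bo m q (x 1%nat) * (Do m q (x 1%nat) - Ao m q (x 1%nat))).
Proof. intros Hm Hx. belc m q x Hm Hx. Qed.

Lemma BelE11 m q x : 0 < m -> good m q x -> Bel m q 0 3 3 0 x = gl m q 3 3 x * fRN m q (x 1%nat) * (Bo m q (x 1%nat) * (Do m q (x 1%nat) - Ao m q (x 1%nat))).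
Proof. intros Hm Hx. belc m q x Hm Hx. Qed.

Lemma fRN_nz_aux m q r : r <> 0 -> fRN m q r <> 0 -> (r - 2 * m) * r + q ^ 2 <> 0.
Proof.
  intros H1 H2 Hc. apply H2. unfold fRN.
  replace (1 - 2 * m / r + q ^ 2 / r ^ 2) with (((r - 2 * m) * r + q ^ 2) / r ^ 2) by (field; auto).
  rewrite Hc. field. auto.
Qed.

Ltac fin := repeat match goal with
  | |- _ /\ _ => split
  | |- True => exact I
  | |- (?r - 2 * ?m) * ?r + ?q ^ 2 <> 0 => apply fRN_nz_aux; assumption
  | |- _ => assumption
  end.

Definition h1 (m q r : R) : R :=
  6 * m ^ 2 / r ^ 4 - 12 * m * (q ^ 2 + m ^ 2) / r ^ 5
  + (7 * q ^ 4 + 30 * m ^ 2 * q ^ 2) / r ^ 6 - 26 * m * q ^ 4 / r ^ 7 + 7 * q ^ 6 / r ^ 8.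
Definition h2 (m q r : R) : R :=
  4 * m ^ 2 / r ^ 2 - 8 * m * q ^ 2 / r ^ 3 + 13 * q ^ 4 / (3 * r ^ 4).

Lemma pt1 m q x : 0 < m -> good m q x ->
  - beljU m q xi1 xi1 xi1 x 0%nat * (x 1%nat) ^ 2 = h1 m q (x 1%nat).
Proof.
  intros Hm Hx. unfold beljU. rewrite sum4_gu. unfold belj, sum4. cbn [xi1 gu].
  rewrite !Bel0000 by auto. prep m q x Hm Hx.
  unfold h1, Ao, Bo, Do, f1, f2. unfold fRN. field. fin.
Qed.

Ltac pt2tac m q x Hm Hx :=
  unfold beljU; rewrite sum4_gu; unfold belj, sum4; cbn [xi1 xi2 xi3 xi4 gu];
  rewrite ?BelE0, ?BelE1, ?BelE2, ?BelE3, ?BelE4, ?BelE5, ?BelE6, ?BelE7, ?BelE8,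
    ?BelE9, ?BelE10, ?BelE11 by auto; prep m q x Hm Hx; cbn [gl];
  unfold h2, Ao, Bo, Do, f1, f2; unfold fRN; field; fin.

Lemma pt2 m q x : 0 < m -> good m q x ->
  - beljU m q xi2 xi2 xi1 x 0%nat * (x 1%nat) ^ 2 =
  (sin (x 3%nat) ^ 2 + cos (x 3%nat) ^ 2 * cos (x 2%nat) ^ 2) * h2 m q (x 1%nat).
Proof. intros Hm Hx. pt2tac m q x Hm Hx. Qed.

Lemma pt3 m q x : 0 < m -> good m q x ->
  - beljU m q xi3 xi3 xi1 x 0%nat * (x 1%nat) ^ 2 =
  (cos (x 3%nat) ^ 2 + sin (x 3%nat) ^ 2 * cos (x 2%nat) ^ 2) * h2 m q (x 1%nat).
Proof. intros Hm Hx. pt2tac m q x Hm Hx. Qed.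

Lemma pt4 m q x : 0 < m -> good m q x ->
  - beljU m q xi4 xi4 xi1 x 0%nat * (x 1%nat) ^ 2 =
  sin (x 2%nat) ^ 2 * h2 m q (x 1%nat).
Proof. intros Hm Hx. pt2tac m q x Hm Hx. Qed.

Lemma ptEM m q x : 0 < m -> good m q x ->
  - EMcur m q xi1 x 0%nat * (x 1%nat) ^ 2 = q ^ 2 / (x 1%nat) ^ 2.
Proof.
  intros Hm Hx. prep m q x Hm Hx. unfold EMcur, sum4. cbn [Tmix gu gl xi1].
  field. fin.
Qed.

Lemma RInt_gen_poly (rp : R) (P h : R -> R) : 0 < rp ->
  (forall r, 0 < r -> is_derive (fun r => P (/ r)) r (h r)) ->
  (forall r, 0 < r -> continuous h r) ->
  continuous P 0 -> P 0 = 0 ->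
  is_RInt_gen h (at_right rp) (Rbar_locally p_infty) (- P (/ rp)).
Proof.
  intros Hrp Hd Hc HP0 P0.
  unfold is_RInt_gen.
  apply filterlimi_lim_ext_loc with
    (f := fun ab : R * R => minus (P (/ snd ab)) (P (/ fst ab))).
  - apply Filter_prod with (Q := fun a => rp < a < rp + 1) (R := fun b => rp + 1 < b).
    + unfold at_right, within. apply locally_interval with (a := Finite (rp - 1)) (b := Finite (rp + 1)).
      simpl; lra. simpl; lra. simpl. intros y H1 H2 H3. lra.
    + exists (rp + 1). intros; lra.
    + intros a b Ha Hb. simpl.
      apply (is_RInt_derive (fun r => P (/ r)) h).
      * intros x Hx. apply Hd. rewrite Rmin_left in Hx by lra. lra.
      * intros x Hx. apply Hc. rewrite Rmin_left in Hx by lra. lra.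
  - replace (- P (/ rp)) with (minus 0 (P (/ rp))) by (unfold minus, plus, opp; simpl; ring).
    unfold minus.
    apply (filterlim_comp_2 (G := locally 0) (H := locally (opp (P (/ rp)))) (fun ab : R * R => P (/ snd ab)) (fun ab : R*R => opp (P (/ fst ab))) plus).
    + apply (filterlim_comp _ _ _ snd (fun r => P (/ r)) _ (Rbar_locally p_infty)).
      apply filterlim_snd.
      apply (filterlim_comp _ _ _ Rinv P _ (locally 0)).
      * assert (H := filterlim_Rbar_inv p_infty). simpl in H. apply H. discriminate.
      * rewrite <- P0 at 2. exact HP0.
    + apply (filterlim_comp _ _ _ (fun ab : R*R => P (/ fst ab)) opp _ (locally (P (/ rp)))).
      apply (filterlim_comp _ _ _ fst (fun r => P (/ r)) _ (at_right rp)).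
      apply filterlim_fst.
      apply (filterlim_filter_le_1 (F := locally rp)). apply filter_le_within.
      exact (ex_derive_continuous (fun r => P (/ r)) rp (ex_intro _ _ (Hd rp Hrp))).
      exact (filterlim_opp (V := R_NormedModule) (P (/ rp))).
    + exact (filterlim_plus (V := R_NormedModule) 0 (opp (P (/ rp)))).
Qed.

Lemma flux_gen m q t0 (A : vfield) (W : R -> R -> R) (h : R -> R) (I : R)
  (V : R -> R) (V0 : R) :
  (forall r th ph, rplus m q < r -> 0 < th < PI ->
     - A (mkpt t0 r th ph) 0%nat * r ^ 2 = W th ph * h r) ->
  is_RInt_gen h (at_right (rplus m q)) (Rbar_locally p_infty) I ->
  (forall ph, is_RInt (fun th => sin th * (W th ph * I)) 0 PI (V ph)) ->
  is_RInt V 0 (2 * PI) V0 ->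
  Qflux m q t0 A = V0.
Proof.
  intros HA HI HV HV0. unfold Qflux. apply is_RInt_unique.
  apply (is_RInt_ext V); [|exact HV0].
  intros ph _. symmetry. apply is_RInt_unique.
  apply (is_RInt_ext (fun th => sin th * (W th ph * I))); [|apply HV].
  intros th Hth. rewrite Rmin_left, Rmax_right in Hth by (pose proof PI_RGT_0; lra).
  f_equal. symmetry. apply is_RInt_gen_unique.
  apply (is_RInt_gen_ext (fun r => scal (W th ph) (h r))).
  - apply Filter_prod with (Q := fun a => rplus m q < a) (R := fun b => rplus m q < b).
    + unfold at_right, within. apply locally_interval with (a := Finite (rplus m q - 1)) (b := p_infty).
      simpl; lra. simpl; auto. intros; auto.
    + exists (rplus m q). intros; auto.
    + intros a b Ha Hb. simpl. intros r Hr. rewrite HA. reflexivity.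
      assert (Rmin a b > rplus m q) by (apply Rmin_glb_lt; auto). lra. auto.
  - apply (is_RInt_gen_scal h (W th ph) I HI).
Qed.

Definition P1 (m q u : R) : R :=
  - (2 * m ^ 2 * u ^ 3 - 3 * m * (q ^ 2 + m ^ 2) * u ^ 4
     + (7 * (q ^ 2) ^ 2 + 30 * m ^ 2 * q ^ 2) / 5 * u ^ 5
     - 13 * m * (q ^ 2) ^ 2 / 3 * u ^ 6 + (q ^ 2) ^ 3 * u ^ 7).
Definition P2 (m q u : R) : R :=
  - (4 * m ^ 2 * u - 4 * m * q ^ 2 * u ^ 2 + 13 * (q ^ 2) ^ 2 / 9 * u ^ 3).
Definition P3 (m q u : R) : R := - (q ^ 2 * u).
Definition h3 (m q r : R) : R := q ^ 2 / r ^ 2.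

Lemma cont_of_ex (f : R -> R) x : ex_derive f x -> continuous f x.
Proof. intros H. exact (ex_derive_continuous f x H). Qed.

Ltac nz2 := repeat match goal with
  | |- _ /\ _ => split
  | |- True => exact I
  | |- _ * _ <> 0 => apply Rmult_integral_contrapositive_currified
  | |- _ => lra
  end.
Ltac cont := apply cont_of_ex; auto_derive; nz2.

Lemma int_h (m q : R) (P h : R -> R) : 0 < m ->
  (forall r, 0 < r -> is_derive (fun r => P (/ r)) r (h r)) ->
  (forall r, 0 < r -> continuous h r) ->
  continuous P 0 -> P 0 = 0 ->
  is_RInt_gen h (at_right (rplus m q)) (Rbar_locally p_infty) (- P (/ rplus m q)).
Proof.
  intros Hm. apply RInt_gen_poly. pose proof (rplus_ge_m m q). lra.
Qed.

Lemma int1 m q : 0 < m ->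
  is_RInt_gen (h1 m q) (at_right (rplus m q)) (Rbar_locally p_infty) (- P1 m q (/ rplus m q)).
Proof.
  intros Hm. apply int_h; auto.
  - intros r Hr. unfold P1, h1. auto_derive. nz2. field. lra.
  - intros r Hr. unfold h1. cont.
  - unfold P1. cont.
  - unfold P1. ring.
Qed.

Lemma int2 m q : 0 < m ->
  is_RInt_gen (h2 m q) (at_right (rplus m q)) (Rbar_locally p_infty) (- P2 m q (/ rplus m q)).
Proof.
  intros Hm. apply int_h; auto.
  - intros r Hr. unfold P2, h2. auto_derive. nz2. field. lra.
  - intros r Hr. unfold h2. cont.
  - unfold P2. cont.
  - unfold P2. ring.
Qed.

Lemma int3 m q : 0 < m ->
  is_RInt_gen (h3 m q) (at_right (rplus m q)) (Rbar_locally p_infty) (- P3 m q (/ rplus m q)).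
Proof.
  intros Hm. apply int_h; auto.
  - intros r Hr. unfold P3, h3. auto_derive. nz2. field. lra.
  - intros r Hr. unfold h3. cont.
  - unfold P3. cont.
  - unfold P3. ring.
Qed.

Lemma RInt_der (f df : R -> R) a b v : a <= b ->
  (forall x, a <= x <= b -> is_derive f x (df x)) ->
  (forall x, continuous df x) -> v = f b - f a -> is_RInt df a b v.
Proof.
  intros Hab Hd Hc Hv. subst v.
  apply (is_RInt_derive f df a b).
  - intros x Hx. rewrite Rmin_left, Rmax_right in Hx by lra. auto.
  - intros x _. auto.
Qed.

Lemma eq_via (a b k s c : R) : s * s + c * c = 1 -> a - b = k * (s * s + c * c - 1) -> a = b.
Proof. intros H1 H2. rewrite H1 in H2. lra. Qed.

Ltac trig x := pose proof (sin2_cos2 x); unfold Rsqr in *; lra.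

Lemma th1 (I : R) : is_RInt (fun th => sin th * (1 * I)) 0 PI (2 * I).
Proof.
  apply (RInt_der (fun th => - cos th * I)). pose proof PI_RGT_0; lra.
  - intros x _. auto_derive; [repeat split | field].
  - intros x. cont.
  - rewrite cos_PI, cos_0. ring.
Qed.

Lemma th2 (I ph : R) : is_RInt (fun th => sin th * ((sin ph ^ 2 + cos ph ^ 2 * cos th ^ 2) * I)) 0 PI
   (I * (2 * sin ph ^ 2 + 2 / 3 * cos ph ^ 2)).
Proof.
  apply (RInt_der (fun th => I * (- cos th * sin ph ^ 2 - cos ph ^ 2 * cos th ^ 3 / 3))).
  pose proof PI_RGT_0; lra.
  - intros x _. auto_derive; [repeat split | field].
  - intros x. cont.
  - rewrite cos_PI, cos_0. field.
Qed.

Lemma th3 (I ph : R) : is_RInt (fun th => sin th * ((cos ph ^ 2 + sin ph ^ 2 * cos th ^ 2) * I)) 0 PI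
   (I * (2 * cos ph ^ 2 + 2 / 3 * sin ph ^ 2)).
Proof.
  apply (RInt_der (fun th => I * (- cos th * cos ph ^ 2 - sin ph ^ 2 * cos th ^ 3 / 3))).
  pose proof PI_RGT_0; lra.
  - intros x _. auto_derive; [repeat split | field].
  - intros x. cont.
  - rewrite cos_PI, cos_0. field.
Qed.

Lemma th4 (I : R) : is_RInt (fun th => sin th * (sin th ^ 2 * I)) 0 PI (4 / 3 * I).
Proof.
  apply (RInt_der (fun th => I * (- cos th + cos th ^ 3 / 3))).
  pose proof PI_RGT_0; lra.
  - intros x _. auto_derive; [repeat split |].
    apply (eq_via _ _ (- I * sin x) (sin x) (cos x)). trig x. field.
  - intros x. cont.
  - rewrite cos_PI, cos_0. field.
Qed.

Lemma phc (c : R) : is_RInt (fun _ => c) 0 (2 * PI) (2 * PI * c).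
Proof.
  apply (RInt_der (fun ph => c * ph)). pose proof PI_RGT_0; lra.
  - intros x _. auto_derive; [repeat split | field].
  - intros x. cont.
  - ring.
Qed.

Lemma ph2 (I : R) : is_RInt (fun ph => I * (2 * sin ph ^ 2 + 2 / 3 * cos ph ^ 2)) 0 (2 * PI)
  (8 * PI / 3 * I).
Proof.
  apply (RInt_der (fun ph => I * ((ph - sin ph * cos ph) + (ph + sin ph * cos ph) / 3))).
  pose proof PI_RGT_0; lra.
  - intros x _. auto_derive; [repeat split |].
    apply (eq_via _ _ (- (4 / 3) * I) (sin x) (cos x)). trig x. field.
  - intros x. cont.
  - rewrite sin_2PI, cos_2PI, sin_0, cos_0. field.
Qed.

Lemma ph3 (I : R) : is_RInt (fun ph => I * (2 * cos ph ^ 2 + 2 / 3 * sin ph ^ 2)) 0 (2 * PI)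
  (8 * PI / 3 * I).
Proof.
  apply (RInt_der (fun ph => I * ((ph + sin ph * cos ph) + (ph - sin ph * cos ph) / 3))).
  pose proof PI_RGT_0; lra.
  - intros x _. auto_derive; [repeat split |].
    apply (eq_via _ _ (- (4 / 3) * I) (sin x) (cos x)). trig x. field.
  - intros x. cont.
  - rewrite sin_2PI, cos_2PI, sin_0, cos_0. field.
Qed.

Lemma rp_pos m q : 0 < m -> 0 < rplus m q.
Proof. intros. pose proof (rplus_ge_m m q). lra. Qed.

Lemma rp_q2 m q : q ^ 2 <= m ^ 2 -> q ^ 2 = 2 * m * rplus m q - rplus m q ^ 2.
Proof.
  intros H. unfold rplus. set (s := sqrt (m ^ 2 - q ^ 2)).
  assert (Hs : s * s = m ^ 2 - q ^ 2) by (apply sqrt_sqrt; lra).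
  replace ((m + s) ^ 2) with (m ^ 2 + 2 * m * s + s * s) by ring. lra.
Qed.

Lemma Q1val m q t0 : 0 < m -> q ^ 2 <= m ^ 2 ->
  Qflux m q t0 (beljU m q xi1 xi1 xi1) = 2 * PI * (2 * (- P1 m q (/ rplus m q))).
Proof.
  intros Hm Hmq.
  apply (flux_gen m q t0 _ (fun _ _ => 1) (h1 m q) (- P1 m q (/ rplus m q)) (fun _ => 2 * (- P1 m q (/ rplus m q)))).
  - intros r th ph Hr Hth. pose proof (pt1 m q (mkpt t0 r th ph) Hm (conj Hr Hth)) as H.
    cbn [mkpt] in H. rewrite H. ring.
  - apply int1; auto.
  - intros ph. apply th1.
  - apply phc.
Qed.

Lemma QEMval m q t0 : 0 < m -> q ^ 2 <= m ^ 2 ->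
  Qflux m q t0 (EMcur m q xi1) = 2 * PI * (2 * (- P3 m q (/ rplus m q))).
Proof.
  intros Hm Hmq.
  apply (flux_gen m q t0 _ (fun _ _ => 1) (h3 m q) (- P3 m q (/ rplus m q)) (fun _ => 2 * (- P3 m q (/ rplus m q)))).
  - intros r th ph Hr Hth. pose proof (ptEM m q (mkpt t0 r th ph) Hm (conj Hr Hth)) as H.
    cbn [mkpt] in H. rewrite H. unfold h3. ring.
  - apply int3; auto.
  - intros ph. apply th1.
  - apply phc.
Qed.

Lemma Q2val m q t0 X : 0 < m -> q ^ 2 <= m ^ 2 -> X = xi2 \/ X = xi3 \/ X = xi4 ->
  Qflux m q t0 (beljU m q X X xi1) = 8 * PI / 3 * (- P2 m q (/ rplus m q)).
Proof.
  intros Hm Hmq [HX|[HX|HX]]; subst X.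
  - apply (flux_gen m q t0 _ (fun th ph => sin ph ^ 2 + cos ph ^ 2 * cos th ^ 2) (h2 m q) (- P2 m q (/ rplus m q))
      (fun ph => (- P2 m q (/ rplus m q)) * (2 * sin ph ^ 2 + 2 / 3 * cos ph ^ 2))).
    + intros r th ph Hr Hth. pose proof (pt2 m q (mkpt t0 r th ph) Hm (conj Hr Hth)) as H.
      cbn [mkpt] in H. rewrite H. reflexivity.
    + apply int2; auto.
    + intros ph. apply th2.
    + apply ph2.
  - apply (flux_gen m q t0 _ (fun th ph => cos ph ^ 2 + sin ph ^ 2 * cos th ^ 2) (h2 m q) (- P2 m q (/ rplus m q))
      (fun ph => (- P2 m q (/ rplus m q)) * (2 * cos ph ^ 2 + 2 / 3 * sin ph ^ 2))).
    + intros r th ph Hr Hth. pose proof (pt3 m q (mkpt t0 r th ph) Hm (conj Hr Hth)) as H.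
      cbn [mkpt] in H. rewrite H. reflexivity.
    + apply int2; auto.
    + intros ph. apply th3.
    + apply ph3.
  - apply (flux_gen m q t0 _ (fun th ph => sin th ^ 2) (h2 m q) (- P2 m q (/ rplus m q))
      (fun ph => 4 / 3 * (- P2 m q (/ rplus m q)))).
    + intros r th ph Hr Hth. pose proof (pt4 m q (mkpt t0 r th ph) Hm (conj Hr Hth)) as H.
      cbn [mkpt] in H. rewrite H. reflexivity.
    + apply int2; auto.
    + intros ph. apply th4.
    + replace (8 * PI / 3 * - P2 m q (/ rplus m q)) with (2 * PI * (4 / 3 * - P2 m q (/ rplus m q))) by field.
      apply phc.
Qed.

Lemma A1 m q : 0 < m -> q ^ 2 <= m ^ 2 -> let rp := rplus m q in
  2 * PI * (2 * (- P1 m q (/ rp))) =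
  4 * PI / (15 * rp) * (6 - 14 * (m / rp) + 14 * (m ^ 2 / rp ^ 2) - 5 * (m ^ 3 / rp ^ 3)).
Proof.
  intros Hm Hmq rp. pose proof (rp_pos m q Hm). pose proof (rp_q2 m q Hmq).
  fold rp in H, H0. unfold P1. rewrite H0. field. lra.
Qed.

Lemma A2 m q : 0 < m -> q ^ 2 <= m ^ 2 -> let rp := rplus m q in
  8 * PI / 3 * (- P2 m q (/ rp)) = 8 * PI / 27 * rp * (13 - 16 * (m / rp) + 16 * (m ^ 2 / rp ^ 2)).
Proof.
  intros Hm Hmq rp. pose proof (rp_pos m q Hm). pose proof (rp_q2 m q Hmq).
  fold rp in H, H0. unfold P2. rewrite H0. field. lra.
Qed.

Lemma A3 m q : 0 < m -> q ^ 2 <= m ^ 2 -> let rp := rplus m q in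
  2 * PI * (2 * (- P3 m q (/ rp))) = 4 * PI * q ^ 2 / rp.
Proof.
  intros Hm Hmq rp. pose proof (rp_pos m q Hm). fold rp in H. unfold P3. field. lra.
Qed.

Theorem mainTheorem8 (m q : R) (Hm : 0 < m) (Hmq : q ^ 2 <= m ^ 2) :
  let rp := rplus m q in
  (forall t0 : R,
     Qflux m q t0 (beljU m q xi1 xi1 xi1) =
     4 * PI / (15 * rp) *
       (6 - 14 * (m / rp) + 14 * (m ^ 2 / rp ^ 2) - 5 * (m ^ 3 / rp ^ 3))) /\
  (forall (X : vfield), X = xi2 \/ X = xi3 \/ X = xi4 ->
   forall t0 : R,
     Qflux m q t0 (beljU m q X X xi1) =
     8 * PI / 27 * rp * (13 - 16 * (m / rp) + 16 * (m ^ 2 / rp ^ 2))) /\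
  (forall t0 : R, Qflux m q t0 (EMcur m q xi1) = 4 * PI * q ^ 2 / rp) /\
  (q = 0 ->
     (forall t0 : R, Qflux m q t0 (beljU m q xi1 xi1 xi1) = PI / (4 * m)) /\
     (forall (X : vfield), X = xi2 \/ X = xi3 \/ X = xi4 ->
      forall t0 : R, Qflux m q t0 (beljU m q X X xi1) = 16 * PI * m / 3)).
Proof.
  intros rp.
  assert (P1' : forall t0, Qflux m q t0 (beljU m q xi1 xi1 xi1) =
     4 * PI / (15 * rp) * (6 - 14 * (m / rp) + 14 * (m ^ 2 / rp ^ 2) - 5 * (m ^ 3 / rp ^ 3))).
  { intros t0. rewrite Q1val by auto. apply A1; auto. }
  assert (P2' : forall (X : vfield), X = xi2 \/ X = xi3 \/ X = xi4 -> forall t0,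
     Qflux m q t0 (beljU m q X X xi1) =
     8 * PI / 27 * rp * (13 - 16 * (m / rp) + 16 * (m ^ 2 / rp ^ 2))).
  { intros X HX t0. rewrite Q2val by auto. apply A2; auto. }
  split; [exact P1'|split; [exact P2'|split]].
  - intros t0. rewrite QEMval by auto. apply A3; auto.
  - intros Hq. subst q.
    assert (Hrp : rp = 2 * m).
    { unfold rp, rplus. replace (m ^ 2 - 0 ^ 2) with (m ^ 2) by ring.
      rewrite sqrt_pow2 by lra. ring. }
    split.
    + intros t0. rewrite P1', Hrp. field. lra.
    + intros X HX t0. rewrite (P2' X HX t0), Hrp. field. lra.
Qed.
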